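(* Consider the dynamic load balancing game described in the context, where every player follows the best-response algorithm. Then, with $t'=\max_{j\in[m]}\lceil s_j^0/\mu_j\rceil$, for every time $t\ge t'$ the player $i$ who receives the job at time $t$ distributes it among all the servers, i.e., $a_{ij}^t>0$ for all $j\in[m]$ and all $t\ge t'$.
   Context: Dynamic load balancing game: there are $m$ servers with service rates $\mu_j>0$ and $n$ players with job lengths $\lambda_i>0$; let $\lambda_{\max}=\max_i\lambda_i$, and assume $\lambda_{\max}<\sum_{j=1}^m\mu_j$. Time is discrete, $t=0,1,2,\dots$; the state at time $t$ is $s^t=(s_1^t,\dots,s_m^t)$ with $s_j^t\ge0$ the load on server $j$, and $s^0$ is the given initial state. At each time $t$ exactly one player $i$ receives a new job of length $\lambda_i$ and immediately chooses an action $a_i^t$ in the simplex $\{a:\sum_j a_j=1,a_j\ge0\}$, incurring cost $$D_i(a^t,s^t)=\sum_{j=1}^m\lambda_i a_{ij}^t\left(\frac{\lambda_i a_{ij}^t}{2\mu_j}+\frac{s_j^t}{\mu_j}\right),$$ after which the state evolves as $s_j^{t+1}=\max\{0,\ s_j^t+\lambda_i a_{ij}^t-\mu_j\}$ for all $j$. Best-response algorithm: the player $i$ receiving the job at time $t$ observes $s^t$ and chooses $a_i^t$ as the (unique) minimizer of $D_i(a_i,s^t)$ over the simplex (equivalently, the greedy water-filling rule: with servers sorted by $\mu_j/s_j^t$ in decreasing order, put mass on the first $c-1$ servers so that $(\lambda_i a_{ij}^t+s_j^t)/\mu_j$ is equal on them, where $c$ is the smallest index with $\frac{s_c^t}{\mu_c}\ge\frac{\lambda_i+\sum_{k<c}s_k^t}{\sum_{k<c}\mu_k}$,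 or $c=m+1$ if none). *)

(* Defs.v *)
From mathcomp Require Import all_boot all_order all_algebra.
Set Implicit Arguments. Unset Strict Implicit. Unset Printing Implicit Defensive.
Import Order.TTheory GRing.Theory Num.Theory.
Local Open Scope ring_scope.

Section LB.
Variable R : archiRealFieldType.
Variable m : nat.

Definition in_simplex (a : 'I_m -> R) : Prop :=
  (forall j, 0 <= a j) /\ \sum_(j < m) a j = 1.

Definition cost (mu : 'I_m -> R) (lam : R) (a s : 'I_m -> R) : R :=
  \sum_(j < m) lam * a j * (lam * a j / (2 * mu j) + s j / mu j).

Definition best_response (mu : 'I_m -> R) (lam : R) (s a : 'I_m -> R) : Prop :=
  in_simplex a /\ (forall b, in_simplex b -> cost mu lam a s <= cost mu lam b s).

Definition next_state (mu : 'I_m -> R) (lam : R) (s a : 'I_m -> R) : 'I_m -> R :=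
  fun j => Num.max 0 (s j + lam * a j - mu j).

(* t' = max_j ceil(s_j^0 / mu_j)  (as an integer; all terms are >= 0) *)
Definition t_prime (mu s0 : 'I_m -> R) : int :=
  \big[Num.max/0%R]_(j < m) Num.ceil (s0 j / mu j).
End LB.

Definition lambda_max (R : archiRealFieldType) (n : nat) (lam : 'I_n -> R) : R :=
  \big[Num.max/0%R]_(i < n) lam i.

(* Main.v *)
Require Import Defs.
From mathcomp Require Import all_boot all_order all_algebra.
From mathcomp Require Import ring lra.
Import Order.TTheory GRing.Theory Num.Theory.
Local Open Scope ring_scope.

Lemma split2 (R : archiRealFieldType) m (F : 'I_m -> R) j k : j != k ->
  \sum_(i < m) F i = F j + F k + \sum_(i < m | (i != j) && (i != k)) F i.
Proof.
move=> jk; rewrite (bigD1 j) //= (bigD1 k) /=; last by rewrite eq_sym.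
by rewrite addrA.
Qed.

Arguments split2 {R m} F {j k}.

Lemma exch (R : archiRealFieldType) m (mu : 'I_m -> R) (lam : R) (s a : 'I_m -> R) j k :
  (forall j, 0 < mu j) -> 0 < lam -> best_response mu lam s a -> 0 < a j ->
  (lam * a j + s j) / mu j <= (lam * a k + s k) / mu k.
Proof.
move=> mup lp [[a0 a1] opt] aj.
rewrite leNgt; apply/negP => H.
have jk : j != k by apply/eqP => e; move: H; rewrite e ltxx.
set g := (lam * a j + s j) / mu j - (lam * a k + s k) / mu k.
have gp : 0 < g by rewrite /g subr_gt0.
set h := 1 / (2 * mu j) + 1 / (2 * mu k).
have mj := mup j; have mk := mup k.
have hp : 0 < h by rewrite /h; apply: addr_gt0; apply: divr_gt0 => //; lra.
set q := g / (2 * lam * h).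
have qp : 0 < q by rewrite /q; apply: divr_gt0 => //; apply: mulr_gt0 => //; lra.
have qe : q * (2 * lam * h) = g.
  rewrite /q mulrVK //; rewrite unitfE; apply/lt0r_neq0; apply: mulr_gt0 => //; lra.
set e := Num.min (a j) q.
have ep : 0 < e by rewrite /e lt_min aj qp.
have eaj : e <= a j by rewrite /e ge_min lexx.
have eq' : e <= q by rewrite /e ge_min lexx orbT.
set b := fun i => if i == j then a j - e else if i == k then a k + e else a i.
have bsim : in_simplex b.
  split.
    move=> i; rewrite /b; case: (i == j); first lra.
    case: (i == k); last exact: a0.
    have := a0 k; lra.
  rewrite -a1 (split2 b jk) (split2 a jk) /b eqxx [k == j]eq_sym (negbTE jk) eqxx.
  idtac.
  rewrite (eq_bigr a); first lra.
  by move=> i /andP [/negbTE -> /negbTE ->].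
have := opt b bsim.
rewrite /cost (split2 _ jk) [X in _ <= X](split2 _ jk).
have Hs : \sum_(i < m | (i != j) && (i != k)) lam * b i * (lam * b i / (2 * mu i) + s i / mu i) = \sum_(i < m | (i != j) && (i != k)) lam * a i * (lam * a i / (2 * mu i) + s i / mu i).
  by apply: eq_bigr => i /andP [/negbTE ij /negbTE ik]; rewrite /b ij ik.
rewrite Hs /b eqxx [k == j]eq_sym (negbTE jk) eqxx.
set S := \sum_(i < m | _) _.
have idn : lam * (a j - e) * (lam * (a j - e) / (2 * mu j) + s j / mu j) +
   lam * (a k + e) * (lam * (a k + e) / (2 * mu k) + s k / mu k) -
   (lam * a j * (lam * a j / (2 * mu j) + s j / mu j) +
    lam * a k * (lam * a k / (2 * mu k) + s k / mu k)) =
   lam * e * (- g + lam * e * h).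
  rewrite /g /h; field; apply/andP; split; apply/lt0r_neq0 => //.
have : lam * e * (- g + lam * e * h) < 0.
  rewrite pmulr_rlt0; last exact: mulr_gt0.
  have H1 : lam * h * e <= lam * h * q.
    by rewrite ler_pM2l //; apply: mulr_gt0.
  lra.
lra.
Qed.

Arguments exch {R m mu lam s a j} k.

Lemma bm m (F : 'I_m -> int) j : F j <= \big[Num.max/0]_(i < m) F i.
Proof.
have : j \in index_enum 'I_m := mem_index_enum j.
elim: (index_enum 'I_m) => //= x r IH; rewrite inE big_cons /= le_max.
by case/orP => [/eqP->|/IH->]; rewrite ?lexx ?orbT.
Qed.

Lemma maxdiv (R : archiRealFieldType) (x c : R) : 0 < c ->
  Num.max 0 x / c = Num.max 0 (x / c).
Proof.
move=> cp; case: (leP 0 x) => h.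
  by rewrite (max_idPr _) // divr_ge0 // ltW.
by rewrite mul0r (max_idPl _) // ltW // pmulr_llt0 // invr_gt0.
Qed.

Lemma maxle (R : archiRealFieldType) (x y z : R) : x <= y \/ x <= z ->
  Num.max 0 x <= Num.max (Num.max 0 y) z.
Proof.
move=> H; rewrite ge_max !le_max lexx /=; case: H => ->; by rewrite ?orbT.
Qed.

Theorem lemma2 (R : archiRealFieldType) (m n : nat)
    (mu : 'I_m -> R) (lam : 'I_n -> R) (s0 : 'I_m -> R)
    (player : nat -> 'I_n) (a s : nat -> 'I_m -> R) :
  (forall j, 0 < mu j) ->
  (forall i, 0 < lam i) ->
  lambda_max lam < \sum_(j < m) mu j ->
  (forall j, 0 <= s0 j) ->
  s 0%N = s0 ->
  (forall t, best_response mu (lam (player t)) (s t) (a t)) ->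
  (forall t, s t.+1 = next_state mu (lam (player t)) (s t) (a t)) ->
  forall t : nat, t_prime mu s0 <= t%:Z -> forall j, 0 < a t j.
Proof.
move=> mup lp _ s0p S0 BR SS.
have rS : forall t j, s t.+1 j / mu j =
    Num.max 0 ((lam (player t) * a t j + s t j) / mu j - 1).
  move=> t j; rewrite SS /next_state maxdiv //; congr (Num.max 0 _).
  by field; apply/lt0r_neq0.
have sp : forall t j, 0 <= s t j.
  by case=> [|t] j; [rewrite S0 | rewrite SS /next_state le_max lexx].
have wge : forall t k, s t k / mu k <= (lam (player t) * a t k + s t k) / mu k.
  move=> t k; rewrite mulrDl lerDr; apply: divr_ge0; last exact: ltW.
  apply: mulr_ge0; [exact: ltW | by case: (BR t) => [[a0 _] _]].
have inv : forall t j k, s t j / mu j <= Num.max (s t k / mu k) (s0 j / mu j - t%:R).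
  elim=> [|t IH] j k; first by rewrite S0 le_max subr0 lexx orbT.
  rewrite !rS -natr1.
  have [le|lt] := leP ((lam (player t) * a t j + s t j) / mu j)
                      ((lam (player t) * a t k + s t k) / mu k).
    apply: le_trans (_ : Num.max 0 ((lam (player t) * a t k + s t k) / mu k - 1) <= _).
      by rewrite ge_max le_max lexx /= le_max; apply/orP; right; lra.
    by rewrite le_max lexx.
  have aj0 : a t j = 0.
    case: (BR t) => [[a0 _] _]; have := a0 j; rewrite le_eqVlt => /orP [/eqP <- //|aj].
    have := exch k mup (lp _) (BR t) aj; lra.
  move: lt; rewrite aj0 mulr0 add0r => lt.
  have := IH j k; have := wge t k; rewrite le_max => wk /orP [H|H]; first lra.
  by apply: maxle; right; lra.
move=> t tt j.
have req : forall j k, s t j / mu j <= s t k / mu k.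
  move=> j' k; have := inv t j' k; rewrite le_max => /orP [//|H].
  have H1 : s0 j' / mu j' <= t%:R.
    have : Num.ceil (s0 j' / mu j') <= t%:Z.
      apply: le_trans tt; exact: (bm _ (fun i => Num.ceil (s0 i / mu i)) j').
    by rewrite ceil_le_int.
  have : 0 <= s t k / mu k by apply: divr_ge0; [exact: sp | exact: ltW].
  lra.
case: (BR t) => [[a0 a1] _].
rewrite lt_neqAle a0 andbT eq_sym; apply/negP => /eqP aj.
case: (pickP (fun k => 0 < a t k)) => [k ak|none].
  have := exch j mup (lp _) (BR t) ak.
  rewrite aj mulr0 add0r mulrDl.
  have : 0 < lam (player t) * a t k / mu k by apply: divr_gt0 => //; apply: mulr_gt0.
  have := req j k; have := req k j; lra.
move: a1; rewrite big1 => [|i _]; first by move/eqP; rewrite eq_sym oner_eq0.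
by apply/eqP; rewrite eq_le a0 andbT leNgt none.
Qed.
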